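(* Let $r,s,t,u,v$ be non-negative integers with $r+s\ge 1$ and $u+v=4t-2r+4$. Let $G=(r,\,r+s-1,\,t,\,t,\,s+t,\,u)$ and $H=(r,\,r+s-1,\,t,\,t,\,s+t,\,v)$, with interesting factors $g(x)$ and $h(x)$ respectively. Then $$g(x)=-h(-x+2s+6t+4).$$
   Context: All graphs are finite and simple. For integers $1\le j\le k$, a $(j,k)$-biclique is a graph whose vertex set is the disjoint union of a $j$-clique and a $k$-clique, with an arbitrary set of additional edges each joining a vertex of the $j$-clique to a vertex of the $k$-clique. For non-negative integers $a,b,c,d,e,f$, the notation $(a,b,c,d,e,f)$ denotes the $(3,k)$-biclique with $k=a+b+c+d+e+f$, whose $3$-clique is $\{v_1,v_2,v_3\}$, in which every vertex of the $k$-clique is adjacent to exactly one or exactly two of $v_1,v_2,v_3$, and exactly $a$ (resp. $b$, $c$) vertices of the $k$-clique are adjacent to $v_1$ only (resp. $v_2$ only, $v_3$ only), and exactly $d$ (resp. $e$, $f$) vertices of the $k$-clique are adjacent to exactly $v_2$ and $v_3$ (resp. exactly $v_1$ and $v_3$, exactly $v_1$ and $v_2$). This determines the graph up to isomorphism. The interesting factor of a $(3,k)$-biclique $G$ is the cubic polynomial $P_G(x)/(x)_k$, where $P_G$ is the chromatic polynomial and $(x)_k=x(x-1)\cdots(x-k+1)$. *)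

(* Defs.v *)
From HB Require Import structures.
From mathcomp Require Import all_boot all_order all_algebra.
Set Implicit Arguments. Unset Strict Implicit. Unset Printing Implicit Defensive.
Import GRing.Theory.
Local Open Scope ring_scope.

(* A simple graph is a symmetric irreflexive relation [E : rel T] on a finType T. *)

Definition falling_poly (k : nat) : {poly rat} :=
  \prod_(i < k) ('X - (i%:R)%:P).

Definition indep (T : finType) (E : rel T) (B : {set T}) : bool :=
  [forall x in B, forall y in B, ~~ E x y].

(* Chromatic polynomial: P_G(x) = sum over partitions of V(G) into
   independent sets of (x)_{number of blocks}.  Its value at every natural n
   is the number of proper n-colourings of G. *)
Definition chrom_poly (T : finType) (E : rel T) : {poly rat} :=
  \sum_(P : {set {set T}} | partition P [set: T] && [forall B in P, indep E B])
     falling_poly #|P|.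

(* Vertices: inl i (i < 3) is v_{i+1} of the 3-clique; inr j (j < k) is the
   j-th vertex of the k-clique.  The k-clique vertices are listed in blocks:
   the first a adjacent to v1 only, then b to v2 only, c to v3 only,
   d to {v2,v3}, e to {v1,v3}, f to {v1,v2}. *)
Definition nbrs3 (a b c d e f j : nat) : seq nat :=
  if (j < a)%N then [:: 0%N]
  else if (j < a + b)%N then [:: 1%N]
  else if (j < a + b + c)%N then [:: 2%N]
  else if (j < a + b + c + d)%N then [:: 1%N; 2%N]
  else if (j < a + b + c + d + e)%N then [:: 0%N; 2%N]
  else [:: 0%N; 1%N].

Definition bic_vert (k : nat) : finType := ('I_3 + 'I_k)%type.

Definition bic_adj (a b c d e f : nat) : rel (bic_vert (a + b + c + d + e + f)) :=
  fun x y =>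
    match x, y with
    | inl i, inl i' => i != i'
    | inr j, inr j' => j != j'
    | inl i, inr j => (val i \in nbrs3 a b c d e f (val j))
    | inr j, inl i => (val i \in nbrs3 a b c d e f (val j))
    end.

Definition interesting_factor (a b c d e f : nat) : {poly rat} :=
  chrom_poly (@bic_adj a b c d e f) %/ falling_poly (a + b + c + d + e + f).

(* Main.v *)
Require Import Defs.
From HB Require Import structures.
From mathcomp Require Import all_boot all_order all_algebra.
From mathcomp Require Import ring zify.
Set Implicit Arguments. Unset Strict Implicit. Unset Printing Implicit Defensive.
Import GRing.Theory.
Section Step1.
Variables (T : finType) (E : rel T) (n : nat).

Definition proper (f : {ffun T -> 'I_n}) :=
  [forall x, forall y, E x y ==> (f x != f y)].

Let pp (f : {ffun T -> 'I_n}) := preim_partition f [set: T].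

Lemma pp_part f : partition (pp f) [set: T].
Proof. exact: preim_partitionP. Qed.

Lemma proper_pp f : proper f = [forall B in pp f, indep E B].
Proof.
apply/forallP/forall_inP => [H B /imsetP[x _ ->] | H x].
  apply/forall_inP => y; rewrite inE in_setT /= => /eqP fy; apply/forall_inP => z.
  rewrite inE in_setT /= => /eqP fz; apply/negP => Eyz.
  by move: (forallP (H y) z); rewrite Eyz /= -fy -fz eqxx.
apply/forallP => y; apply/implyP => Exy; apply/negP => /eqP fxy.
have Hb := H _ (imset_f (fun x => [set y in [set: T] | f x == f y]) (in_setT x)).
have /forall_inP/(_ x) := Hb.
rewrite !inE ?in_setT eqxx => /(_ isT)/forall_inP/(_ y).
by rewrite !inE ?in_setT fxy eqxx Exy => /(_ isT).
Qed.

Lemma card_pp (P : {set {set T}}) : partition P [set: T] ->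
  #|[set f | pp f == P]| = n ^_ #|P|.
Proof.
move=> partP; have [/eqP covP tiP nP0] := and3P partP.
have HP x : pblock P x \in P by rewrite pblock_mem // covP.
pose S := {B : {set T} | B \in P}.
have -> : #|P| = #|{: S}| by rewrite card_sig.
rewrite -[n in n ^_ _]card_ord -card_inj_ffuns.
have exB (B : S) : exists x, x \in val B.
  case: B => B PB /=; apply/set0Pn; apply: contraNneq nP0 => <-; done.
pose rep (B : S) := xchoose (exB B).
have reprB (B : S) : rep B \in val B by apply: xchooseP.
pose Psi (f : {ffun T -> 'I_n}) := [ffun B : S => f (rep B)].
have blk (B : S) : pblock P (rep B) = val B.
  by apply: def_pblock (valP B) (reprB B).
have key f : pp f == P -> forall x y, (y \in pblock P x) = (f x == f y).
  move=> /eqP <- x y; apply: pblock_equivalence_partition; rewrite ?inE //.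
  by split => // /eqP ->.
rewrite -(card_in_imset (f := Psi)).
  apply: eq_card => g; rewrite inE; apply/imsetP/idP.
    move=> [f]; rewrite inE => Hf ->; apply/injectiveP => B1 B2.
    rewrite !ffunE => /eqP e; apply: val_inj => /=.
    rewrite -(key f Hf) in e.
    by rewrite -(def_pblock tiP (valP B2) (reprB B2)) (same_pblock tiP e) blk.
  move=> /injectiveP ginj.
  pose f := [ffun x => g (exist _ (pblock P x) (HP x))].
  exists f.
    rewrite inE; apply/eqP; rewrite -[RHS](preim_partition_pblock partP).
    rewrite /pp /preim_partition /equivalence_partition; apply: eq_imset => x.
    apply/setP => y; rewrite !inE !ffunE; apply/eqP/eqP => [/ginj [] //|e].
    by congr (g _); apply: val_inj.
  apply/ffunP => B; rewrite !ffunE; congr (g _); apply: val_inj => /=.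
  by rewrite blk.
move=> f1 f2; rewrite !inE => H1 H2 e; apply/ffunP => x.
have e1 (f : {ffun T -> 'I_n}) : pp f == P ->
   f x = Psi f (exist _ (pblock P x) (HP x)).
  move=> Hf; rewrite ffunE /=; apply/eqP; rewrite -key //.
by rewrite e1 // e e1.
Qed.

Lemma count_proper :
  #|[set f | proper f]| =
  (\sum_(P : {set {set T}} | partition P [set: T] && [forall B in P, indep E B])
     n ^_ #|P|)%N.
Proof.
rewrite -sum1_card (partition_big pp
  (fun P => partition P [set: T] && [forall B in P, indep E B])) /=.
  apply: eq_bigr => P /andP[partP indP]; rewrite -(card_pp partP) -sum1_card.
  apply: eq_bigl => f; rewrite !inE; apply/andP/idP => [[]//|e]; split=> //.
  by rewrite proper_pp (eqP e).
by move=> f; rewrite inE pp_part proper_pp.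
Qed.
End Step1.
Local Open Scope ring_scope.
Section IE.
Variables (U : finType).

Lemma sum_ind (B : {set U}) : \sum_x ((x \in B)%:R : rat) = #|B|%:R.
Proof.
rewrite (eq_bigr (fun x => if x \in B then 1 else 0)) => [|x _]; last by case: (x \in B).
by rewrite -big_mkcond sumr_const.
Qed.

Lemma ind_I (B C : {set U}) x :
  ((x \in B)%:R : rat) * (x \in C)%:R = (x \in B :&: C)%:R.
Proof. by rewrite inE; case: (x \in B); case: (x \in C); rewrite ?mulr0 ?mulr1. Qed.

Lemma sum_delta (x : U) (G : U -> rat) : \sum_y (x == y)%:R * G y = G x.
Proof.
rewrite (bigD1 x) //= eqxx mul1r big1 ?addr0 // => y ny.
by rewrite eq_sym (negbTE ny) mul0r.
Qed.

Lemma cardC_R (B : {set U}) : (#|~: B|%:R : rat) = #|U|%:R - #|B|%:R.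
Proof. by rewrite -(cardsC B) natrD addrC addKr. Qed.

Lemma sum3 (F : U -> U -> U -> rat) :
  \sum_(t : U * U * U) F t.1.1 t.1.2 t.2 = \sum_x \sum_y \sum_z F x y z.
Proof. by symmetry; rewrite pair_bigA pair_bigA. Qed.

Variables (A1 A2 A3 : {set U}).
Let B1 := ~: A1.
Let B2 := ~: A2.
Let B3 := ~: A3.
Let b1 x : rat := (x \in B1)%:R.
Let b2 x : rat := (x \in B2)%:R.
Let b3 x : rat := (x \in B3)%:R.

Lemma pw x y z :
  ([&& x \notin A1, y \notin A2, z \notin A3, x != y, x != z & y != z]%:R : rat)
  = b1 x * b2 y * b3 z - (x == y)%:R * (b1 x * b2 y * b3 z)
    - (x == z)%:R * (b1 x * b2 y * b3 z) - (y == z)%:R * (b1 x * b2 y * b3 z)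
    + (x == z)%:R * ((x == y)%:R * (2 * (b1 x * b2 y * b3 z))).
Proof.
have -> : ([&& x \notin A1, y \notin A2, z \notin A3, x != y, x != z & y != z]%:R : rat)
   = (b1 x * b2 y * b3 z) * ([&& x != y, x != z & y != z])%:R.
  rewrite /b1 /b2 /b3 /B1 /B2 /B3 !inE.
  by case: (x \in A1); case: (y \in A2); case: (z \in A3); rewrite /= ?mul0r ?mul1r ?mulr0.
move: (b1 x * b2 y * b3 z) => P.
have h1 : (x == y) && (x == z) ==> (y == z) by apply/implyP=>/andP[/eqP-> /eqP->].
have h2 : (x == y) && (y == z) ==> (x == z) by apply/implyP=>/andP[/eqP-> /eqP->].
have h3 : (x == z) && (y == z) ==> (x == y) by apply/implyP=>/andP[/eqP-> /eqP->].
move: h1 h2 h3.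
by case: (x == y); case: (x == z); case: (y == z) => //= _ _ _; ring.
Qed.


Lemma ie_main :
  \sum_(t : U * U * U)
    ([&& t.1.1 \notin A1, t.1.2 \notin A2, t.2 \notin A3, t.1.1 != t.1.2,
         t.1.1 != t.2 & t.1.2 != t.2]%:R : rat)
  = (#|U|%:R - #|A1|%:R) * (#|U|%:R - #|A2|%:R) * (#|U|%:R - #|A3|%:R)
    - (#|U|%:R - #|A1 :|: A2|%:R) * (#|U|%:R - #|A3|%:R)
    - (#|U|%:R - #|A1 :|: A3|%:R) * (#|U|%:R - #|A2|%:R)
    - (#|U|%:R - #|A2 :|: A3|%:R) * (#|U|%:R - #|A1|%:R)
    + 2 * (#|U|%:R - #|A1 :|: A2 :|: A3|%:R).
Proof.
under eq_bigr => t _ do rewrite pw.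
rewrite big_split /= !sumrB.
rewrite (sum3 (fun x y z => b1 x * b2 y * b3 z))
        (sum3 (fun x y z => (x == y)%:R * (b1 x * b2 y * b3 z)))
        (sum3 (fun x y z => (x == z)%:R * (b1 x * b2 y * b3 z)))
        (sum3 (fun x y z => (y == z)%:R * (b1 x * b2 y * b3 z)))
        (sum3 (fun x y z => (x == z)%:R * ((x == y)%:R * (2 * (b1 x * b2 y * b3 z))))).
have e0 : \sum_x \sum_y \sum_z b1 x * b2 y * b3 z = #|B1|%:R * #|B2|%:R * #|B3|%:R.
  rewrite -!sum_ind (@mulr_suml rat) (@mulr_suml rat); apply: eq_bigr => x _.
  rewrite -mulrA (@mulr_suml rat) (@mulr_sumr rat); apply: eq_bigr => y _.
  rewrite !(@mulr_sumr rat); apply: eq_bigr => z _; by rewrite mulrA.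
have e1 : \sum_x \sum_y \sum_z (x == y)%:R * (b1 x * b2 y * b3 z)
          = #|B1 :&: B2|%:R * #|B3|%:R.
  transitivity (\sum_x \sum_y (x == y)%:R * (b1 x * b2 y * \sum_z b3 z)).
    by apply: eq_bigr => x _; apply: eq_bigr => y _; rewrite !(@mulr_sumr rat).
  under eq_bigr => x _ do rewrite (sum_delta x (fun y => b1 x * b2 y * \sum_z b3 z)).
  by rewrite -(@mulr_suml rat) sum_ind; under eq_bigr => x _ do rewrite ind_I; rewrite sum_ind.
have e2 : \sum_x \sum_y \sum_z (x == z)%:R * (b1 x * b2 y * b3 z)
          = #|B1 :&: B3|%:R * #|B2|%:R.
  under eq_bigr => x _ do under eq_bigr => y _ do rewrite (sum_delta x (fun z => b1 x * b2 y * b3 z)).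
  transitivity (\sum_x (b1 x * b3 x) * \sum_y b2 y).
    apply: eq_bigr => x _; rewrite (@mulr_sumr rat); apply: eq_bigr => y _.
    by rewrite mulrAC.
  by rewrite -(@mulr_suml rat) sum_ind; under eq_bigr => x _ do rewrite ind_I; rewrite sum_ind.
have e3 : \sum_x \sum_y \sum_z (y == z)%:R * (b1 x * b2 y * b3 z)
          = #|B1|%:R * #|B2 :&: B3|%:R.
  under eq_bigr => x _ do under eq_bigr => y _ do rewrite (sum_delta y (fun z => b1 x * b2 y * b3 z)).
  transitivity (\sum_x b1 x * \sum_y (b2 y * b3 y)).
    apply: eq_bigr => x _; rewrite (@mulr_sumr rat); apply: eq_bigr => y _.
    by rewrite mulrA.
  by rewrite -(@mulr_suml rat) !sum_ind; under eq_bigr => y _ do rewrite ind_I; rewrite sum_ind.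
have e4 : \sum_x \sum_y \sum_z (x == z)%:R * ((x == y)%:R * (2 * (b1 x * b2 y * b3 z)))
          = 2 * #|B1 :&: B2 :&: B3|%:R.
  under eq_bigr => x _ do under eq_bigr => y _ do
    rewrite (sum_delta x (fun z => (x == y)%:R * (2 * (b1 x * b2 y * b3 z)))).
  under eq_bigr => x _ do rewrite (sum_delta x (fun y => 2 * (b1 x * b2 y * b3 x))).
  rewrite -(@mulr_sumr rat); congr (_ * _).
  under eq_bigr => x _ do rewrite (ind_I B1 B2) ind_I.
  by rewrite sum_ind.
rewrite e0 e1 e2 e3 e4 /B1 /B2 /B3 -!setCU !cardC_R.
ring.
Qed.

End IE.
Section Bic.
Variables (a b c d e f n : nat).
Local Notation k := (a + b + c + d + e + f)%N.
Local Notation nb := (nbrs3 a b c d e f).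
Local Notation adj := (@bic_adj a b c d e f).

Definition i0 : 'I_3 := @Ordinal 3 0 isT.
Definition i1 : 'I_3 := @Ordinal 3 1 isT.
Definition i2 : 'I_3 := @Ordinal 3 2 isT.

Definition Nset (i : nat) : {set 'I_k} := [set j : 'I_k | i \in nb (val j)].

Definition tsel (t : 'I_n * 'I_n * 'I_n) (i : 'I_3) : 'I_n :=
  if val i == 0%N then t.1.1 else if val i == 1%N then t.1.2 else t.2.

Definition phi (p : ('I_n * 'I_n * 'I_n) * {ffun 'I_k -> 'I_n}) :
    {ffun bic_vert k -> 'I_n} :=
  [ffun x => match x with inl i => tsel p.1 i | inr j => p.2 j end].

Definition psi (F : {ffun bic_vert k -> 'I_n}) :
    ('I_n * 'I_n * 'I_n) * {ffun 'I_k -> 'I_n} :=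
  ((F (inl i0), F (inl i1), F (inl i2)), [ffun j => F (inr j)]).

Lemma phi_bij : bijective phi.
Proof.
exists psi.
  move=> [[[c1 c2] c3] h]; rewrite /psi /phi !ffunE /tsel /=.
  by congr (_, _); apply/ffunP => j; rewrite !ffunE.
move=> F; apply/ffunP => x; rewrite /psi /phi !ffunE.
case: x => [i|j]; last by rewrite ffunE.
by case: i => [[|[|[|?]]] Hi] //=; congr (F (inl _)); apply: val_inj.
Qed.

Definition tcond (t : 'I_n * 'I_n * 'I_n) (h : {ffun 'I_k -> 'I_n}) :=
  [&& t.1.1 \notin h @: Nset 0, t.1.2 \notin h @: Nset 1, t.2 \notin h @: Nset 2,
      t.1.1 != t.1.2, t.1.1 != t.2 & t.1.2 != t.2].

Lemma proper_phi p : proper adj (phi p) = injectiveb p.2 && tcond p.1 p.2.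
Proof.
case: p => [[[c1 c2] c3] h] /=.
apply/forallP/andP => [H | [/injectiveP hinj /and3P[n1 n2 /and4P[n3 d12 d13 d23]]] x].
  have Hxy x y : adj x y -> phi (c1, c2, c3, h) x != phi (c1, c2, c3, h) y.
    by move=> axy; have := forallP (H x) y; rewrite axy.
  split.
    apply/injectiveP => j j' ejj; apply/eqP/negPn/negP => nj.
    by have := Hxy (inr j) (inr j') nj; rewrite !ffunE /= ejj eqxx.
  have HN (i : 'I_3) cc : cc = tsel (c1, c2, c3) i -> cc \notin h @: Nset i.
    move=> ->; apply/imsetP => [[j]]; rewrite inE => Hj ej.
    by have := Hxy (inl i) (inr j) Hj; rewrite !ffunE /= ej eqxx.
  rewrite /tcond /= (HN i0) // (HN i1) // (HN i2) //=.
  have := Hxy (inl i0) (inl i1) isT; have := Hxy (inl i0) (inl i2) isT.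
  have := Hxy (inl i1) (inl i2) isT; rewrite !ffunE /tsel /=.
  by move=> -> -> ->.
have HN (i : 'I_3) (j : 'I_k) : val i \in nb (val j) -> tsel (c1, c2, c3) i != h j.
  move=> Hj; apply/negP => /eqP ej.
  have Hm : h j \in h @: Nset i by apply: imset_f; rewrite inE.
  move: Hm; rewrite -ej.
  by case: i Hj {ej} => [[|[|[|?]]] Hi] //= Hj; rewrite ?(negbTE n1) ?(negbTE n2) ?(negbTE n3).
apply/forallP => y; apply/implyP.
case: x => [i|j]; case: y => [i'|j'] /= axy; rewrite !ffunE.
- case: i axy => [[|[|[|?]]] Hi] //; case: i' => [[|[|[|?]]] Hi'] //= _;
    by rewrite // eq_sym.
- exact: HN.
- by rewrite eq_sym; apply: HN.
- by apply: contra axy => /eqP /hinj ->.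
Qed.
Lemma seg_sum (m l v : nat) (F : nat -> nat) :
  (forall j, (m <= j < m + l)%N -> F j = v) -> (\sum_(m <= j < m + l) F j = l * v)%N.
Proof. by move=> H; rewrite (eq_big_nat _ _ H) sum_nat_const_nat addKn. Qed.

Lemma card_nb (P : seq nat -> bool) :
  #|[set j : 'I_k | P (nb (val j))]| =
  (P [:: 0%N] * a + P [:: 1%N] * b + P [:: 2%N] * c + P [:: 1%N; 2%N] * d
   + P [:: 0%N; 2%N] * e + P [:: 0%N; 1%N] * f)%N.
Proof.
rewrite cardsE -sum1_card big_mkcond /=.
rewrite -(big_mkord xpredT (fun j => if P (nb j) then 1%N else 0%N)).
rewrite (@big_cat_nat _ _ _ (a + b + c + d + e)) ?leq_addr //.
rewrite (@big_cat_nat _ _ _ (a + b + c + d)) ?leq_addr //.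
rewrite (@big_cat_nat _ _ _ (a + b + c)) ?leq_addr //.
rewrite (@big_cat_nat _ _ _ (a + b)) ?leq_addr //.
rewrite (@big_cat_nat _ _ _ a) ?leq_addr //.
rewrite -{1}[a]add0n.
rewrite (@seg_sum 0 a (P [:: 0%N])); last first.
  move=> j /andP[h1 h2]; have -> : nb j = [:: 0%N].
    by rewrite /nbrs3; repeat case: ifP => ?; try (exfalso; lia).
  by case: (P _).
rewrite (@seg_sum a b (P [:: 1%N])); last first.
  move=> j /andP[h1 h2]; have -> : nb j = [:: 1%N].
    by rewrite /nbrs3; repeat case: ifP => ?; try (exfalso; lia).
  by case: (P _).
rewrite (@seg_sum (a + b) c (P [:: 2%N])); last first.
  move=> j /andP[h1 h2]; have -> : nb j = [:: 2%N].
    by rewrite /nbrs3; repeat case: ifP => ?; try (exfalso; lia).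
  by case: (P _).
rewrite (@seg_sum (a + b + c) d (P [:: 1%N; 2%N])); last first.
  move=> j /andP[h1 h2]; have -> : nb j = [:: 1%N; 2%N].
    by rewrite /nbrs3; repeat case: ifP => ?; try (exfalso; lia).
  by case: (P _).
rewrite (@seg_sum (a + b + c + d) e (P [:: 0%N; 2%N])); last first.
  move=> j /andP[h1 h2]; have -> : nb j = [:: 0%N; 2%N].
    by rewrite /nbrs3; repeat case: ifP => ?; try (exfalso; lia).
  by case: (P _).
rewrite (@seg_sum (a + b + c + d + e) f (P [:: 0%N; 1%N])); last first.
  move=> j /andP[h1 h2]; have -> : nb j = [:: 0%N; 1%N].
    by rewrite /nbrs3; repeat case: ifP => ?; try (exfalso; lia).
  by case: (P _).
by rewrite !(mulnC _ (nat_of_bool _)).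
Qed.
Lemma count_bic :
  (#|[set F : {ffun bic_vert k -> 'I_n} | proper adj F]|%:R : rat) = (n ^_ k)%:R *
   ((n%:R - #|Nset 0|%:R) * (n%:R - #|Nset 1|%:R) * (n%:R - #|Nset 2|%:R)
    - (n%:R - #|Nset 0 :|: Nset 1|%:R) * (n%:R - #|Nset 2|%:R)
    - (n%:R - #|Nset 0 :|: Nset 2|%:R) * (n%:R - #|Nset 1|%:R)
    - (n%:R - #|Nset 1 :|: Nset 2|%:R) * (n%:R - #|Nset 0|%:R)
    + 2 * (n%:R - #|Nset 0 :|: Nset 1 :|: Nset 2|%:R)).
Proof.
set Qv := (X in _ = _ * X).
rewrite -sum_ind.
under eq_bigr => F _ do rewrite inE.
rewrite (reindex phi (onW_bij _ phi_bij)) /=.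
under eq_bigr => p _ do rewrite proper_phi.
transitivity (\sum_(t : 'I_n * 'I_n * 'I_n) \sum_(h : {ffun 'I_k -> 'I_n})
                ((injectiveb h && tcond t h)%:R : rat)).
  by rewrite pair_bigA.
rewrite exchange_big /=.
transitivity (\sum_(h : {ffun 'I_k -> 'I_n}) (injectiveb h)%:R * Qv).
  apply: eq_bigr => h _; case hi: (injectiveb h); last first.
    by rewrite mul0r big1.
  rewrite mul1r /=; move/injectiveP: hi => hi.
  have := ie_main (h @: Nset 0) (h @: Nset 1) (h @: Nset 2).
  rewrite /tcond => ->.
  by rewrite card_ord -!imsetU !card_imset.
rewrite -(@mulr_suml rat); congr (_ * _).
have := card_inj_ffuns 'I_k 'I_n; rewrite !card_ord => <-; rewrite -sum_ind.
by apply: eq_bigr => h _; rewrite inE.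
Qed.
End Bic.
Lemma falling_horner m (x : nat) : (falling_poly m).[x%:R] = ((x ^_ m)%:R : rat).
Proof.
elim: m => [|m IH]; first by rewrite /falling_poly big_ord0 hornerC ffactn0.
rewrite /falling_poly big_ord_recr /= hornerM -/(falling_poly m) IH hornerXsubC.
rewrite ffactnSr; case: (leqP m x) => hmx; first by rewrite natrM natrB.
by rewrite ffact_small // mul0r.
Qed.

Lemma chrom_horner (T : finType) (E : rel T) (x : nat) :
  (chrom_poly E).[x%:R] = #|[set F : {ffun T -> 'I_x} | proper E F]|%:R.
Proof.
rewrite /chrom_poly horner_sum count_proper natr_sum.
by apply: eq_bigr => P _; rewrite falling_horner.
Qed.

Lemma poly_eq_nat (p q : {poly rat}) :
  (forall x : nat, p.[x%:R] = q.[x%:R]) -> p = q.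
Proof.
move=> H; apply/eqP; rewrite -subr_eq0; apply/negPn/negP => nz.
set rs := map (fun i : nat => (i%:R : rat)) (iota 0 (size (p - q))).
have H1 : all (root (p - q)) rs.
  by apply/allP => y /mapP[i _ ->]; rewrite /root hornerD hornerN H subrr.
have H2 : uniq rs by rewrite map_inj_uniq ?iota_uniq //; by move=> i j /eqP; rewrite Num.Theory.eqr_nat => /eqP.
by have := max_poly_roots nz H1 H2; rewrite size_map size_iota ltnn.
Qed.

Definition Qf (a b c d e f : nat) (x : rat) : rat :=
  (x - (a + e + f)%:R) * (x - (b + d + f)%:R) * (x - (c + d + e)%:R)
  - (x - (a + b + d + e + f)%:R) * (x - (c + d + e)%:R)
  - (x - (a + c + d + e + f)%:R) * (x - (b + d + f)%:R)
  - (x - (b + c + d + e + f)%:R) * (x - (a + e + f)%:R)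
  + 2 * (x - (a + b + c + d + e + f)%:R).

Definition Qpoly (a b c d e f : nat) : {poly rat} :=
  ('X - (a + e + f)%:R%:P) * ('X - (b + d + f)%:R%:P) * ('X - (c + d + e)%:R%:P)
  - ('X - (a + b + d + e + f)%:R%:P) * ('X - (c + d + e)%:R%:P)
  - ('X - (a + c + d + e + f)%:R%:P) * ('X - (b + d + f)%:R%:P)
  - ('X - (b + c + d + e + f)%:R%:P) * ('X - (a + e + f)%:R%:P)
  + 2%:R%:P * ('X - (a + b + c + d + e + f)%:R%:P).

Lemma Qpoly_horner a b c d e f x : (Qpoly a b c d e f).[x] = Qf a b c d e f x.
Proof. by rewrite /Qpoly /Qf !hornerE. Qed.

Lemma chrom_bic a b c d e f :
  chrom_poly (@bic_adj a b c d e f) =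
  falling_poly (a + b + c + d + e + f) * Qpoly a b c d e f.
Proof.
apply: poly_eq_nat => x.
rewrite chrom_horner count_bic hornerM falling_horner Qpoly_horner; congr (_ * _).
have cN (P : seq nat -> bool) (S : {set 'I_(a + b + c + d + e + f)}) :
    S = [set j | P (nbrs3 a b c d e f (val j))] ->
    #|S| = (P [:: 0%N] * a + P [:: 1%N] * b + P [:: 2%N] * c + P [:: 1%N; 2%N] * d
   + P [:: 0%N; 2%N] * e + P [:: 0%N; 1%N] * f)%N.
  by move=> ->; apply: card_nb.
rewrite (cN (fun s => 0%N \in s)) /Nset; last by apply/setP => j; rewrite !inE.
rewrite (cN (fun s => 1%N \in s)); last by apply/setP => j; rewrite !inE.
rewrite (cN (fun s => 2%N \in s)); last by apply/setP => j; rewrite !inE.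
rewrite (cN (fun s => (0%N \in s) || (1%N \in s))); last by apply/setP => j; rewrite !inE.
rewrite (cN (fun s => (0%N \in s) || (2%N \in s))); last by apply/setP => j; rewrite !inE.
rewrite (cN (fun s => (1%N \in s) || (2%N \in s))); last by apply/setP => j; rewrite !inE.
rewrite (cN (fun s => [|| 0%N \in s, 1%N \in s | 2%N \in s])); last first.
  by apply/setP => j; rewrite !inE orbA.
rewrite /Qf /= !mul1n !mul0n !add0n !addn0 !natrD.
ring.
Qed.

Lemma if_eq a b c d e f :
  interesting_factor a b c d e f = Qpoly a b c d e f.
Proof.
rewrite /interesting_factor chrom_bic mulrC mulpK //.
by apply: monic_neq0; apply: monic_prod_XsubC.
Qed.
Theorem mainTheorem8 (r s t u v : nat)
  (hrs : (1 <= r + s)%N)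
  (huv : ((u + v)%:Z = 4 * t%:Z - 2 * r%:Z + 4)%R) :
  interesting_factor r (r + s - 1) t t (s + t) u =
  - (interesting_factor r (r + s - 1) t t (s + t) v
       \Po (((2 * s + 6 * t + 4)%N)%:R%:P - 'X)).
Proof.
rewrite !if_eq; apply: poly_eq_nat => x.
rewrite hornerN horner_comp.
have hc : ((((2 * s + 6 * t + 4)%N)%:R%:P - 'X).[x%:R] : rat) = (2 * s + 6 * t + 4)%N%:R - x%:R.
  by rewrite !hornerE.
rewrite hc !Qpoly_horner /Qf.
have hn : (u + v + 2 * r = 4 * t + 4)%N by lia.
have hu : (u%:R : rat) = (4 * t + 4)%N%:R - v%:R - (2 * r)%N%:R.
  by rewrite -hn !natrD; ring.
have hb : ((r + s - 1)%N%:R : rat) = r%:R + s%:R - 1 by rewrite natrB // natrD.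
rewrite !natrD hb hu ?natrD ?natrM.
ring.
Qed.
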